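(* Let $L>0$ be the constant of the quadratic upper bound below and let $0<\alpha\le 2/L$. There exists a constant $\rho_2>0$, independent of $k$, such that for every $k\ge1$ there are $A^{k+1}=\nabla_wH(w^{k+1},z^{k+1})$ and $B^{k+1}\in\partial_zH(w^{k+1},z^{k+1})$ with $$\big\|[A^{k+1};B^{k+1}]\big\|_2\le\rho_2\big\|[w^{k+1};z^{k+1}]-[w^k;z^k]\big\|_2 .$$
   Context: Data: $y\in\mathbb{R}^m$, $X\in\mathbb{R}^{m\times n}$ with rows $x_i^T$, preconditioned so that $X^TX=I_n$. Fix $\delta>0$. $S(x)=\frac{1}{2\sqrt{\delta}}x^2+\frac{\sqrt\delta}{2}$ if $|x|<\sqrt\delta$, $S(x)=|x|$ if $|x|\ge\sqrt\delta$. $H(w,z)=\tfrac12\|y-Xw-z\|_2^2+\delta\sum_{i=1}^m\frac{|z_i|}{S(y_i-x_i^Tw)}$, with $\nabla_w H(w,z)=-X^T(y-Xw-z)+\delta X^Tv$, $v_i=\frac{|z_i|S'(y_i-x_i^Tw)}{S(y_i-x_i^Tw)^2}$. $T(x)=0$ if $|x|\le\sqrt\delta$, $T(x)=x-\delta/x$ if $|x|>\sqrt\delta$, componentwise. SARM iteration: $w^0=0$, $z^0=0$, $w^{k+1}=w^k-\alpha\nabla_wH(w^k,z^k)$, $z^{k+1}=T(y-Xw^{k+1})$. $L>0$ is a constant depending only on $\delta$ such that for all $w,w'$ and all $z$ with $|z_i|\le S(y_i-x_i^Tw)$: $H(w',z)\le H(w,z)+\nabla_wH(w,z)^T(w'-w)+\frac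 L2\|w'-w\|_2^2$. For a proper lsc $\sigma:\mathbb{R}^d\to(-\infty,\infty]$, the Fréchet subdifferential $\hat\partial\sigma(b)$ is the set of $u$ with $\liminf_{a\to b,a\ne b}\frac{\sigma(a)-\sigma(b)-\langle u,a-b\rangle}{\|a-b\|}\ge0$, and the limiting subdifferential is $\partial\sigma(x)=\{u:\exists x_k\to x,\ \sigma(x_k)\to\sigma(x),\ u_k\in\hat\partial\sigma(x_k),\ u_k\to u\}$. $\partial_zH(w,z)$ is the limiting subdifferential of $z\mapsto H(w,z)$. *)

(* Defs.v *)
From HB Require Import structures.
From mathcomp Require Import all_boot all_order all_algebra.
From mathcomp Require Import all_classical all_reals all_analysis.
Set Implicit Arguments.
Unset Strict Implicit.
Unset Printing Implicit Defensive.
Import Order.TTheory GRing.Theory Num.Theory.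
Import numFieldNormedType.Exports.
Local Open Scope classical_set_scope.
Local Open Scope ring_scope.

Section SARM.
Variable R : realType.

Definition dotv (k : nat) (u v : 'cV[R]_k) : R := \sum_(i < k) u i 0 * v i 0.
Definition norm2 (k : nat) (v : 'cV[R]_k) : R := Num.sqrt (dotv v v).

Definition Sfun (delta x : R) : R :=
  if `|x| < Num.sqrt delta then x ^+ 2 / (2 * Num.sqrt delta) + Num.sqrt delta / 2
  else `|x|.
Definition Sder (delta x : R) : R :=
  if `|x| < Num.sqrt delta then x / Num.sqrt delta else Num.sg x.

Definition Tfun (delta x : R) : R :=
  if `|x| <= Num.sqrt delta then 0 else x - delta / x.
Definition Tvec (delta : R) (k : nat) (v : 'cV[R]_k) : 'cV[R]_k :=
  \col_i Tfun delta (v i 0).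

Variables (m n : nat).

Definition resid (y : 'cV[R]_m) (X : 'M[R]_(m, n)) (w : 'cV[R]_n) : 'cV[R]_m :=
  y - X *m w.

Definition Hfun (delta : R) (y : 'cV[R]_m) (X : 'M[R]_(m, n))
    (w : 'cV[R]_n) (z : 'cV[R]_m) : R :=
  (norm2 (y - X *m w - z)) ^+ 2 / 2
  + delta * \sum_(i < m) `|z i 0| / Sfun delta (resid y X w i 0).

Definition gradwH (delta : R) (y : 'cV[R]_m) (X : 'M[R]_(m, n))
    (w : 'cV[R]_n) (z : 'cV[R]_m) : 'cV[R]_n :=
  let r := resid y X w in
  let v := \col_i (`|z i 0| * Sder delta (r i 0) / (Sfun delta (r i 0)) ^+ 2) in
  - (X^T *m (y - X *m w - z)) + delta *: (X^T *m v).

Fixpoint sarm (delta alpha : R) (y : 'cV[R]_m) (X : 'M[R]_(m, n)) (k : nat)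
    : 'cV[R]_n * 'cV[R]_m :=
  match k with
  | 0%N => (0, 0)
  | k'.+1 =>
      let wz := sarm delta alpha y X k' in
      let w' := wz.1 - alpha *: gradwH delta y X wz.1 wz.2 in
      (w', Tvec delta (y - X *m w'))
  end.

End SARM.

(* Frechet subdifferential: u such that
   liminf_{a -> b, a <> b} (s a - s b - <u, a - b>) / ||a - b|| >= 0,
   with the liminf >= 0 written out in epsilon-eta form. *)
Definition frechet_subdiff (R : realType) (d : nat) (s : 'cV[R]_d -> R)
    (b u : 'cV[R]_d) : Prop :=
  forall eps : R, 0 < eps -> exists eta : R, 0 < eta /\
    forall a : 'cV[R]_d, 0 < norm2 (a - b) -> norm2 (a - b) < eta ->
      - eps <= (s a - s b - dotv u (a - b)) / norm2 (a - b).

Definition limiting_subdiff (R : realType) (d : nat) (s : 'cV[R]_d -> R)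
    (x u : 'cV[R]_d) : Prop :=
  exists (xs us : nat -> 'cV[R]_d),
    xs @ \oo --> x /\ (fun k => s (xs k)) @ \oo --> s x /\
    (forall k, frechet_subdiff s (xs k) (us k)) /\ us @ \oo --> u.

(* Main.v *)
Require Import Defs.
From HB Require Import structures.
From mathcomp Require Import all_boot all_order all_algebra.
From mathcomp Require Import all_classical all_reals all_analysis.
From mathcomp Require Import ring lra.
Import Order.TTheory GRing.Theory Num.Theory.
Import numFieldNormedType.Exports.
Set Implicit Arguments.
Unset Strict Implicit.
Local Open Scope ring_scope.
Section Scal.
Variable R : realType.

Lemma powle (s q : R) k : 0 <= s -> s <= q -> s^+k <= q^+k.
Proof.
move=> s0 sq; elim: k => [|k IH]; first by rewrite !expr0.
rewrite !exprS; apply: ler_pM => //; by rewrite exprn_ge0.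
Qed.

Lemma arith6 (s p q : R) : 0 < s -> s <= p -> s <= q ->
  s^+4 * (p^+2 + p*q + q^+2) <= 3 * (p^+3 * q^+3).
Proof.
move=> s0 sa sb.
have p0 : 0 < p by lra.
have q0 : 0 < q by lra.
have e1 : s^+4 <= p * q^+3.
  rewrite (_ : 4 = 1 + 3)%N // exprD expr1; apply: ler_pM => //; try lra.
    by rewrite exprn_ge0 // ltW.
  by apply: powle; lra.
have e2 : s^+4 <= p^+2 * q^+2.
  rewrite (_ : 4 = 2 + 2)%N // exprD.
  apply: ler_pM; rewrite ?exprn_ge0; try lra; apply: powle; lra.
have e3 : s^+4 <= p^+3 * q.
  rewrite (_ : 4 = 3 + 1)%N // exprD expr1; apply: ler_pM => //; try lra.
    by rewrite exprn_ge0 // ltW.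
  by apply: powle; lra.
have f1 := ler_wpM2r (ltW (exprn_gt0 2 p0)) e1.
have f2 := ler_wpM2r (ltW (mulr_gt0 p0 q0)) e2.
have f3 := ler_wpM2r (ltW (exprn_gt0 2 q0)) e3.
have -> : 3 * (p ^+ 3 * q ^+ 3) = p * q^+3 * p^+2 + p^+2 * q^+2 * (p * q) + p^+3 * q * q^+2 by ring.
rewrite !mulrDr; lra.
Qed.

Lemma out_lip (s a b : R) : 0 < s -> s <= `|a| -> s <= `|b| ->
  `|(s^+2)^+2 / a^+3 - (s^+2)^+2 / b^+3| <= 3 * `|a - b|.
Proof.
move=> s0 sa sb.
have a0 : a != 0 by rewrite -normr_gt0; lra.
have b0 : b != 0 by rewrite -normr_gt0; lra.
have -> : (s^+2)^+2 / a^+3 - (s^+2)^+2 / b^+3 =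
   (s^+4 * (a^+2 + a*b + b^+2)) / (a^+3 * b^+3) * (b - a).
  by field; rewrite a0 b0.
rewrite normrM (distrC b a); apply: ler_wpM2r => //.
rewrite (normrM _ (_^-1)) normfV (normrM (a^+3)) (normrM (s^+4)) !normrX (gtr0_norm s0).
have h1 : `|a ^+ 2 + a * b + b ^+ 2| <= `|a|^+2 + `|a| * `|b| + `|b|^+2.
  rewrite -!normrX -normrM.
  apply: (le_trans (ler_normD _ _)); rewrite lerD2r.
  apply: (le_trans (ler_normD _ _)); rewrite !normrX normrM //.
rewrite ler_pdivrMr; last by rewrite mulr_gt0 // exprn_gt0 // normr_gt0.
have hs : 0 <= s^+4 by rewrite exprn_ge0 // ltW.
apply: (le_trans (ler_wpM2l hs h1)).

exact: arith6 s0 sa sb.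
Qed.


Definition us (s x : R) := if `|x| <= s then - x else - ((s^+2)^+2 / x^+3).

Lemma mixed_lip (s a b : R) : 0 < s -> `|a| <= s -> s < `|b| ->
  `|- a - - ((s^+2)^+2 / b^+3)| <= 3 * `|a - b|.
Proof.
move=> s0; rewrite ler_norml => /andP [ha1 ha2] hb.
have sn0 : s != 0 by rewrite gt_eqF.
case: (ltrP 0 b) => b0.
- rewrite gtr0_norm // in hb.
  have bn0 : b != 0 by rewrite gt_eqF.
  have -> : (- a - - ((s^+2)^+2 / b^+3) : R) = (s - a) + ((s^+2)^+2 / b^+3 - (s^+2)^+2/s^+3).
    by field; rewrite ?sn0 ?bn0 ?oppr_eq0 ?sn0.
  apply: le_trans (ler_normD _ _) _.
  have h : `|(s ^+ 2) ^+ 2 / b ^+ 3 - (s ^+ 2) ^+ 2 / s ^+ 3| <= 3 * `|b - s|.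
    apply: out_lip => //; [rewrite (gtr0_norm b0) | rewrite gtr0_norm //]; lra.
  rewrite (ger0_norm (_ : 0 <= s - a)); last lra.
  rewrite (gtr0_norm (_ : 0 < b - s)) in h; last lra.
  rewrite (ltr0_norm (_ : a - b < 0)); last lra.
  lra.
- have bn : b < 0.
    rewrite le_eqVlt in b0; case/orP: b0 => // /eqP b0.
    by rewrite b0 normr0 in hb; lra.
  rewrite ltr0_norm // in hb.
  have bn0 : b != 0 by rewrite lt_eqF.
  have -> : (- a - - ((s^+2)^+2 / b^+3) : R) = (- s - a) + ((s^+2)^+2 / b^+3 - (s^+2)^+2/(-s)^+3).
    by field; rewrite ?sn0 ?bn0 ?oppr_eq0 ?sn0.
  apply: le_trans (ler_normD _ _) _.
  have h : `|(s ^+ 2) ^+ 2 / b ^+ 3 - (s ^+ 2) ^+ 2 / (-s) ^+ 3| <= 3 * `|b - - s|.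
    apply: out_lip => //; [rewrite (ltr0_norm bn) | rewrite normrN gtr0_norm //]; lra.
  rewrite (ler0_norm (_ : - s - a <= 0)); last lra.
  rewrite (ltr0_norm (_ : b - - s < 0)) in h; last lra.
  rewrite (gtr0_norm (_ : 0 < a - b)); last lra.
  lra.
Qed.

Lemma us_lip (s a b : R) : 0 < s -> `|us s a - us s b| <= 3 * `|a - b|.
Proof.
move=> s0; rewrite /us.
case: (lerP `|a| s) => ha; case: (lerP `|b| s) => hb.
- by rewrite opprK addrC -opprB normrN distrC ler_peMl // ?normr_ge0 //; lra.
- exact: mixed_lip.
- by rewrite distrC (distrC a); apply: mixed_lip.
- rewrite opprK addrC -opprB normrN.
  by apply: out_lip => //; lra.
Qed.


Lemma sqrt_facts (delta : R) : 0 < delta ->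
  0 < Num.sqrt delta /\ delta = (Num.sqrt delta)^+2.
Proof. by move=> d0; rewrite sqrtr_gt0 sqr_sqrtr // ltW. Qed.

Lemma grad_comp_s (s x : R) : 0 < s ->
  - (x - Tfun (s^+2) x) + s^+2 * (`|Tfun (s^+2) x| * Sder (s^+2) x / (Sfun (s^+2) x)^+2)
  = us s x.
Proof.
move=> s0; rewrite /Tfun /Sder /Sfun /us sqrtr_sqr (gtr0_norm s0).
case: (lerP `|x| s) => hx.
  by rewrite subr0 normr0 !mul0r mulr0 addr0.
rewrite ltNge (ltW hx) /=.
have x0 : x != 0 by rewrite -normr_gt0; lra.
case: (ltrP 0 x) => xp.
- rewrite gtr0_norm // in hx.
  have hT : 0 < x - s^+2 / x.
    rewrite subr_gt0 ltr_pdivrMr // -expr2; apply: (@lt_le_trans _ _ (s * x)).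
      by rewrite expr2 ltr_pM2l.
    by rewrite expr2 ler_pM2r //; lra.
  rewrite (gtr0_norm hT) gtr0_sg // gtr0_norm //.
  by field.
- have xn : x < 0 by rewrite lt_neqAle xp andbT.
  rewrite ltr0_norm // in hx.
  have hT : x - s^+2 / x < 0.
    by rewrite subr_lt0 ltr_ndivlMr //; nra.
  rewrite (ltr0_norm hT) ltr0_sg // ltr0_norm //.
  by field.
Qed.

Lemma grad_comp (delta x : R) : 0 < delta ->
  - (x - Tfun delta x) + delta * (`|Tfun delta x| * Sder delta x / (Sfun delta x)^+2)
  = us (Num.sqrt delta) x.
Proof.
move=> d0; have [s0 sd] := sqrt_facts d0.
move: (Num.sqrt delta) s0 sd => s s0 sd; subst delta; exact: grad_comp_s.
Qed.


Lemma cub (p s : R) : 0 <= p -> p <= s -> p^+3 + p * s^+2 <= s^+2 * (2 * s).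
Proof.
move=> p0 ps.
have h1 : p^+3 <= s^+3 by apply: powle.
have h2 : p * s^+2 <= s * s^+2 by rewrite ler_wpM2r // sqr_ge0.
have -> : s^+2 * (2 * s) = s^+3 + s * s^+2 by rewrite exprS; ring.
lra.
Qed.

Lemma fin0 (x a S t : R) : 0 < S -> `|x| * S <= t ->
  x^+2/2 <= (x-a)^+2/2 + t*(`|a|/S).
Proof.
move=> S0 h.
have h1 : `|x| <= t / S by rewrite ler_pdivlMr.
have h2 : t * (`|a| / S) = t / S * `|a| by rewrite mulrA mulrAC.
have h3 : x * a <= `|x| * `|a| by rewrite -normrM ler_norm.
have h4 : `|x| * `|a| <= t / S * `|a| by rewrite ler_wpM2r.
rewrite h2; nra.
Qed.

Lemma fin1 (x a c : R) : 0 < c -> c^+2/2 + c*(x-c) <= (x-a)^+2/2 + c * `|a|.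
Proof.
move=> c0.
have h1 : c * a <= c * `|a| by apply: ler_wpM2l; [lra | exact: ler_norm].
have h2 := sqr_ge0 (a - x + c).
nra.
Qed.

Lemma soft_s (s x a : R) : 0 < s ->
 (x - Tfun (s^+2) x)^+2 / 2 + s^+2 * (`|Tfun (s^+2) x| / Sfun (s^+2) x)
 <= (x - a)^+2/2 + s^+2 * (`|a| / Sfun (s^+2) x).
Proof.
move=> s0; rewrite /Tfun /Sfun sqrtr_sqr (gtr0_norm s0).
case: (lerP `|x| s) => hx.
  rewrite subr0 normr0 mul0r mulr0 addr0.
  case: (ltrP `|x| s) => hx2.
    have q1 : 0 <= x^+2 / (2 * s) by rewrite divr_ge0 ?sqr_ge0 // mulr_ge0 // ltW.
    have q2 : 0 < s / 2 by rewrite divr_gt0.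
    apply: fin0; first lra.
    rewrite -(real_normK (num_real x)).
    have e : `|x| * (`|x|^+2 / (2*s) + s/2) = (`|x|^+3 + `|x| * s^+2)/(2*s).
      by field; rewrite gt_eqF.
    rewrite e ler_pdivrMr; last by rewrite mulr_gt0.
    by apply: cub; rewrite ?normr_ge0 // ltW.
  apply: fin0; first lra.
  have -> : `|x| = s by apply/eqP; rewrite eq_le hx hx2.
  by rewrite expr2.
rewrite ltNge (ltW hx) /=.
have x0 : x != 0 by rewrite -normr_gt0; lra.
case: (ltrP 0 x) => xp.
- rewrite gtr0_norm // in hx.
  have hT : 0 < x - s^+2 / x.
    by rewrite subr_gt0 ltr_pdivrMr //; nra.
  rewrite (gtr0_norm hT) gtr0_norm //.
  have c0 : 0 < s^+2 / x by rewrite divr_gt0 // exprn_gt0.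
  have -> : x - (x - s^+2/x) = s^+2/x by rewrite opprB addrC subrK.
  have -> : s^+2 * ((x - s^+2/x) / x) = s^+2/x * (x - s^+2/x) by field.
  have -> : s^+2 * (`|a| / x) = s^+2/x * `|a| by rewrite mulrA mulrAC.
  exact: fin1.
- have xn : x < 0 by rewrite lt_neqAle xp andbT.
  rewrite ltr0_norm // in hx.
  have hT : x - s^+2 / x < 0.
    by rewrite subr_lt0 ltr_ndivlMr //; nra.
  rewrite (ltr0_norm hT) ltr0_norm //.
  have c0 : 0 < s^+2 / -x by rewrite divr_gt0 ?exprn_gt0 // oppr_gt0.
  have -> : x - (x - s^+2/x) = - (s^+2 / -x) by field.
  have -> : s^+2 * (- (x - s^+2/x) / - x) = s^+2/ -x * (- x - s^+2/ -x) by field.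
  have -> : s^+2 * (`|a| / -x) = s^+2/ -x * `|- a| by rewrite normrN mulrA mulrAC.
  have -> : (x - a)^+2 = (- x - - a)^+2 by ring.
  rewrite sqrrN; exact: fin1.
Qed.

Lemma soft (delta x a : R) : 0 < delta ->
 (x - Tfun delta x)^+2 / 2 + delta * (`|Tfun delta x| / Sfun delta x)
 <= (x - a)^+2/2 + delta * (`|a| / Sfun delta x).
Proof.
move=> d0; have [s0 sd] := sqrt_facts d0.
move: (Num.sqrt delta) s0 sd => s s0 sd; subst delta; exact: soft_s.
Qed.

End Scal.

Section Vec.
Variable R : realType.

Lemma dotvE k (u v : 'cV[R]_k) : dotv u v = (u^T *m v) 0 0.
Proof. by rewrite /dotv !mxE; apply: eq_bigr => i _; rewrite mxE. Qed.

Lemma dotv_ge0 k (v : 'cV[R]_k) : 0 <= dotv v v.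
Proof. by apply: sumr_ge0 => i _; rewrite -expr2 sqr_ge0. Qed.

Lemma norm2_sq k (v : 'cV[R]_k) : norm2 v ^+ 2 = dotv v v.
Proof. by rewrite /norm2 sqr_sqrtr // dotv_ge0. Qed.

Lemma dotv_col p q (a : 'cV[R]_p) (b : 'cV[R]_q) :
  dotv (col_mx a b) (col_mx a b) = dotv a a + dotv b b.
Proof.
rewrite /dotv big_split_ord /=; congr (_ + _); apply: eq_bigr => i _.
  by rewrite col_mxEu.
by rewrite col_mxEd.
Qed.

Lemma dotvD_le k (a b : 'cV[R]_k) :
  dotv (a + b) (a + b) <= 2 * dotv a a + 2 * dotv b b.
Proof.
rewrite /dotv !mulr_sumr -big_split /=; apply: ler_sum => i _; rewrite !mxE.
have := sqr_ge0 (a i 0 - b i 0); nra.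
Qed.

Lemma dotvZ k (c : R) (v : 'cV[R]_k) : dotv (c *: v) (c *: v) = c^+2 * dotv v v.
Proof. by rewrite /dotv mulr_sumr; apply: eq_bigr => i _; rewrite !mxE; ring. Qed.

Lemma dotvN k (v : 'cV[R]_k) : dotv (- v) (- v) = dotv v v.
Proof. by apply: eq_bigr => i _; rewrite !mxE mulrNN. Qed.

Lemma dotv_iso m n (X : 'M[R]_(m, n)) (v : 'cV[R]_n) : X^T *m X = 1%:M ->
  dotv (X *m v) (X *m v) = dotv v v.
Proof.
by move=> hX; rewrite !dotvE trmx_mul -!mulmxA (mulmxA X^T) hX mul1mx.
Qed.

Lemma dotv_contr m n (X : 'M[R]_(m, n)) (u : 'cV[R]_m) : X^T *m X = 1%:M ->
  dotv (X^T *m u) (X^T *m u) <= dotv u u.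
Proof.
move=> hX.
set w := u - X *m (X^T *m u).
suff -> : dotv u u = dotv (X^T *m u) (X^T *m u) + dotv w w.
  by have := dotv_ge0 w; lra.
rewrite !dotvE (_ : forall A B : 'M[R]_1, A 0 0 + B 0 0 = (A + B) 0 0); last by move=> A B; rewrite mxE.
congr (_ 0 0).
rewrite /w.
rewrite trmx_mul trmxK.
rewrite [(u - _)^T]linearB /= !trmx_mul !trmxK mulmxBl !mulmxBr !mulmxA.
by rewrite -(mulmxA (u^T *m X) X^T X) hX mulmx1 subrr subr0 addrC subrK.
Qed.

End Vec.

Section Main.
Variable R : realType.

Lemma lim_zero d (s : 'cV[R]_d -> R) (b : 'cV[R]_d) :
  (forall a, s b <= s a) -> limiting_subdiff s b 0.
Proof.
move=> hmin; exists (fun _ => b), (fun _ => 0).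
split; first apply: cvg_cst.
split; first apply: cvg_cst.
split; last apply: cvg_cst.
move=> k eps e0; exists 1; split => // a h1 h2.
have -> : dotv 0 (a - b) = 0 by rewrite /dotv big1 // => i _; rewrite mxE mul0r.
rewrite subr0.
have : 0 <= (s a - s b) / norm2 (a - b) by rewrite divr_ge0 ?subr_ge0 // ltW.
lra.
Qed.

Lemma gradT m n (delta : R) (y : 'cV[R]_m) (X : 'M[R]_(m, n)) (w : 'cV[R]_n) :
  0 < delta ->
  gradwH delta y X w (Tvec delta (y - X *m w)) =
  X^T *m (\col_i us (Num.sqrt delta) ((y - X *m w) i 0)).
Proof.
move=> d0; rewrite /gradwH /resid; move: (y - X *m w) => r.
rewrite -mulmxN scalemxAr -mulmxDr; congr (X^T *m _).
apply/matrixP => i j; rewrite !mxE (ord1 j) -grad_comp //.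
Qed.

Lemma Hmin m n (delta : R) (y : 'cV[R]_m) (X : 'M[R]_(m, n)) (w : 'cV[R]_n)
  (a : 'cV[R]_m) : 0 < delta ->
  Hfun delta y X w (Tvec delta (y - X *m w)) <= Hfun delta y X w a.
Proof.
move=> d0; rewrite /Hfun /resid !norm2_sq /dotv; move: (y - X *m w) => r.
rewrite !mulr_suml !mulr_sumr -!big_split /=; apply: ler_sum => i _.
rewrite !mxE -!expr2; exact: soft.
Qed.

End Main.

Lemma sq_lip (R : realType) (s a b : R) : 0 < s ->
  (us s a - us s b) ^+ 2 <= 9 * (a - b) ^+ 2.
Proof.
move=> s0; have h := us_lip a b s0.
rewrite -(real_normK (num_real (us s a - us s b))) -(real_normK (num_real (a - b))).
have -> : (9 : R) * `|a - b| ^+ 2 = (3 * `|a - b|) ^+ 2 by rewrite exprMn; congr (_ * _); rewrite expr2; lra.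
by apply: powle.
Qed.

Theorem theorem2 (R : realType) (m n : nat) (y : 'cV[R]_m) (X : 'M[R]_(m, n))
    (delta L alpha : R) :
  X^T *m X = 1%:M ->
  0 < delta ->
  0 < L ->
  (forall (w w' : 'cV[R]_n) (z : 'cV[R]_m),
     (forall i : 'I_m, `|z i 0| <= Sfun delta (resid y X w i 0)) ->
     Hfun delta y X w' z <=
       Hfun delta y X w z + dotv (gradwH delta y X w z) (w' - w)
       + L / 2 * (norm2 (w' - w)) ^+ 2) ->
  0 < alpha -> alpha <= 2 / L ->
  exists rho2 : R, 0 < rho2 /\
    forall k : nat, (1 <= k)%N ->
      let wk := (sarm delta alpha y X k).1 in
      let zk := (sarm delta alpha y X k).2 in
      let wk1 := (sarm delta alpha y X k.+1).1 in
      let zk1 := (sarm delta alpha y X k.+1).2 in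
      exists (A : 'cV[R]_n) (B : 'cV[R]_m),
        A = gradwH delta y X wk1 zk1 /\
        limiting_subdiff (fun z => Hfun delta y X wk1 z) zk1 B /\
        norm2 (col_mx A B) <= rho2 * norm2 (col_mx wk1 zk1 - col_mx wk zk).
Proof.
move=> hX d0 L0 hL a0 aL.
set q := alpha^-1 ^+ 2.
have q0 : 0 <= q by rewrite /q sqr_ge0.
set C := 18 + 2 * q.
have C0 : 0 < C by rewrite /C; lra.
exists (Num.sqrt C); split; first by rewrite sqrtr_gt0.
case=> // k _ wk zk wk1 zk1.
have e1 : zk = Tvec delta (y - X *m wk) := erefl.
have e2 : wk1 = wk - alpha *: gradwH delta y X wk zk := erefl.
have e3 : zk1 = Tvec delta (y - X *m wk1) := erefl.
clearbody wk zk wk1 zk1; subst zk zk1.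
exists (gradwH delta y X wk1 (Tvec delta (y - X *m wk1))), 0.
split; first by [].
split; first by apply: lim_zero => a; apply: Hmin.
rewrite !gradT // in e2 *.
set r1 := y - X *m wk1 in e2 *; set r0 := y - X *m wk in e2 *.
set U1 := \col_i us (Num.sqrt delta) (r1 i 0).
set U0 := \col_i us (Num.sqrt delta) (r0 i 0).
set D := wk - wk1.
have hG : X^T *m U0 = alpha^-1 *: D.
  by rewrite /D e2 opprB addrC subrK scalerA mulVf ?scale1r // gt_eqF.
have hA : X^T *m U1 = X^T *m (U1 - U0) + alpha^-1 *: D.
  by rewrite -hG mulmxBr subrK.
have hr : r1 - r0 = X *m D.
  by rewrite /r1 /r0 /D mulmxBr opprB addrC addrA subrK.
have s0 : 0 < Num.sqrt delta by rewrite sqrtr_gt0.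
have hdU : dotv (U1 - U0) (U1 - U0) <= 9 * dotv (r1 - r0) (r1 - r0).
  rewrite /dotv mulr_sumr; apply: ler_sum => i _; rewrite !mxE -!expr2.
  exact: sq_lip.
rewrite hr dotv_iso // in hdU.
have h1 := dotvD_le (X^T *m (U1 - U0)) (alpha^-1 *: D).
have h2 := dotv_contr (U1 - U0) hX.
rewrite dotvZ -/q -hA in h1.
have hstep : col_mx wk1 (Tvec delta r1) - col_mx wk (Tvec delta r0)
   = col_mx (- D) (Tvec delta r1 - Tvec delta r0).
  by rewrite opp_col_mx add_col_mx /D opprB.
rewrite hstep /norm2 -sqrtrM ?ler_sqrt; last by rewrite ltW.
- rewrite !dotv_col dotvN.
  have -> : dotv (0 : 'cV[R]_m) 0 = 0 by rewrite /dotv big1 // => i _; rewrite mxE mul0r.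
  have hz := dotv_ge0 (Tvec delta r1 - Tvec delta r0).
  have hD := dotv_ge0 D.
  have : C * dotv D D <= C * (dotv D D + dotv (Tvec delta r1 - Tvec delta r0) (Tvec delta r1 - Tvec delta r0)).
    by apply: ler_wpM2l; [exact: ltW | rewrite lerDl].
  rewrite /C; nra.
- by apply: mulr_ge0; [exact: ltW | exact: dotv_ge0].
Qed.
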